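(* Let $\Phi=(V,C)$ be a $k$-uniform CNF formula such that each variable belongs to at most $d$ clauses, and let $\mu$ be the uniform distribution over its satisfying assignments. Let $k_\alpha,k_\beta\ge1$ be integers with $k_\alpha+k_\beta\le k$, and let $\mathcal{M}\subseteq V$ be such that every clause contains at least $k_\alpha$ variables of $\mathcal{M}$ and at least $k_\beta$ variables of $V\setminus\mathcal{M}$. If $2^{k_\beta}\ge 4\mathrm{e}dk$, then the support of the marginal distribution $\mu_{\mathcal{M}}$ is all of $\{0,1\}^{\mathcal{M}}$, and the Glauber dynamics $P_{\mathsf{Glauber}}$ on $\{0,1\}^{\mathcal{M}}$ has the unique stationary distribution $\mu_{\mathcal{M}}$.
   Context: A CNF formula is $k$-uniform if every clause contains exactly $k$ literals on distinct variables (never both $x$ and $\neg x$). $\mu_{\mathcal{M}}$ is the marginal of $\mu$ on $\mathcal{M}$ and $\mu_v(\cdot\mid\sigma)$ is the marginal of $\mu$ on variable $v$ conditioned on a partial assignment $\sigma$. The Glauber dynamics $P_{\mathsf{Glauber}}$: from state $X\in\{0,1\}^{\mathcal{M}}$, pick $v\in\mathcal{M}$ uniformly at random, keep $X(u)$ for $u\in\mathcal{M}\setminus\{v\}$, and resample $X(v)$ from $\mu_v(\cdot\mid X(\mathcal{M}\setminus\{v\}))$. *)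

(* Defs.v *)
From HB Require Import structures.
From mathcomp Require Import all_boot all_order all_algebra.
From mathcomp Require Import reals sequences exp.
Set Implicit Arguments. Unset Strict Implicit. Unset Printing Implicit Defensive.
Import Order.TTheory GRing.Theory Num.Theory.
Local Open Scope ring_scope.

Section CNF.
Variables (V : finType) (I : finType).
(* A literal (v, b) is satisfied by x iff x v = b; a clause is a set of literals;
   a CNF formula is a family of clauses indexed by the finite type I. *)
Variable C : I -> {set (V * bool)}.

Definition vbl (c : {set (V * bool)}) : {set V} := [set l.1 | l in c].

Definition clause_sat (x : V -> bool) (c : {set (V * bool)}) : bool :=
  [exists l in c, x l.1 == l.2].

Definition k_uniform (k : nat) : Prop :=
  forall i, #|C i| = k /\ #|vbl (C i)| = k.

Definition max_degree_le (d : nat) : Prop :=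
  forall v : V, (#|[set i | v \in vbl (C i)]| <= d)%N.

Definition sat (x : {ffun V -> bool}) : bool := [forall i, clause_sat x (C i)].

Definition agree_on (S : {set V}) (x y : V -> bool) : bool :=
  [forall v in S, x v == y v].

Definition count_sat (S : {set V}) (sigma : V -> bool) : nat :=
  #|[set x : {ffun V -> bool} | sat x && agree_on S x sigma]|.

Variable R : realType.

(* mu = uniform distribution on satisfying assignments;
   mu_v(b | sigma on S) = Pr_mu[x v = b | x agrees with sigma on S] *)
Definition cond_marg (S : {set V}) (sigma : V -> bool) (v : V) (b : bool) : R :=
  (#|[set x : {ffun V -> bool} | [&& sat x, agree_on S x sigma & x v == b]]|)%:R
  / (count_sat S sigma)%:R.

Variable M : {set V}.
Definition Mvar := {v : V | v \in M}.
Definition Mconf := {ffun Mvar -> bool}.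

(* extension of a configuration on M to V (values outside M irrelevant) *)
Definition ext (X : Mconf) : V -> bool :=
  fun v => match insub v with Some u => X u | None => false end.

Definition muM (X : Mconf) : R :=
  (count_sat M (ext X))%:R / (count_sat set0 (fun _ => false))%:R.

(* Glauber dynamics on {0,1}^M.  Convention: if M is empty the state space is a
   single point and the chain is the identity. *)
Definition glauber (X Y : Mconf) : R :=
  if M == set0 then (X == Y)%:R else
  (#|M|%:R)^-1 * \sum_(u : Mvar)
     (if [forall w : Mvar, (w != u) ==> (X w == Y w)]
      then cond_marg (M :\ val u) (ext X) (val u) (Y u) else 0).

End CNF.

Definition is_stationary (S : finType) (R : realType) (P : S -> S -> R) (pi : S -> R) : Prop :=
  (forall s, 0 <= pi s) /\ \sum_(s : S) pi s = 1 /\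
  (forall t, \sum_(s : S) pi s * P s t = pi t).

(* Main.v *)
Require Import Defs.
From HB Require Import structures.
From mathcomp Require Import all_boot all_order all_algebra.
From mathcomp Require Import reals sequences exp.
From mathcomp Require Import zify ring lra.
Set Implicit Arguments. Unset Strict Implicit. Unset Printing Implicit Defensive.
Import Order.TTheory GRing.Theory Num.Theory.

Lemma card_sumb (T : finType) (A : {set T}) : #|A| = \sum_(x : T) (x \in A : nat).
Proof. by rewrite -sum1_card big_mkcond /=; apply: eq_bigr => x _; case: (x \in A). Qed.

Section LLL.
Variables (V I : finType) (C : I -> {set (V * bool)}) (M : {set V}) (sigma : V -> bool).

Definition NS (S : {set I}) : {set {ffun V -> bool}} :=
  [set x : {ffun V -> bool} | [forall j in S, clause_sat x (C j)] && agree_on M x sigma].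
Definition VS (i : I) (S : {set I}) : {set {ffun V -> bool}} :=
  [set x : {ffun V -> bool} | ~~ clause_sat x (C i) && ([forall j in S, clause_sat x (C j)] && agree_on M x sigma)].

Definition TT i := vbl (C i) :\: M.

Lemma indep i (S2 : {set I}) : (forall j, j \in S2 -> [disjoint vbl (C j) & TT i]) ->
  2 ^ #|TT i| * #|VS i S2| <= #|NS S2|.
Proof.
move=> Hd.
pose f (p : {ffun V -> bool} * {set V}) : {ffun V -> bool} :=
  [ffun v => if v \in TT i then v \in p.2 else p.1 v].
have -> : 2 ^ #|TT i| * #|VS i S2| = #|f @: setX (VS i S2) (powerset (TT i))|.
  rewrite card_in_imset ?cardsX ?card_powerset 1?mulnC //.
  move=> [y w] [y' w']; rewrite !inE /= => /andP[Hy Hw] /andP[Hy' Hw'] E.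
  have Ev : forall v, f (y, w) v = f (y', w') v by move=> v; rewrite E.
  move: Hy Hy' => /andP[Hy _] /andP[Hy' _].
  congr pair.
    apply/ffunP => v; have := Ev v; rewrite !ffunE /=.
    case: ifP => // vT _.
    move: vT; rewrite /TT inE => /andP[_ /imsetP[l lC ->]].
    move: Hy Hy'; rewrite /clause_sat !negb_exists => /forallP/(_ l) + /forallP/(_ l).
    by rewrite lC /= => /eqP; case: (y l.1); case: (y' l.1); case: (l.2).
  apply/setP => v; have := Ev v; rewrite !ffunE /=.
  case: ifP => // vT _.
  by rewrite (negbTE (contraFN (fun h => subsetP Hw v h) vT)) (negbTE (contraFN (fun h => subsetP Hw' v h) vT)).
apply: subset_leq_card; apply/subsetP => z /imsetP[[y w] /setXP[Hy Hw] ->].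
move: Hy; rewrite !inE => /and3P[_ /forallP HS /forallP HM].
apply/andP; split.
  apply/forallP => j; apply/implyP => jS.
  have := HS j; rewrite jS /= => /existsP[l /andP[lC Hl]].
  apply/existsP; exists l; rewrite lC /= ffunE.
  have -> : (l.1 \in TT i) = false.
    apply/negP => lT; have := Hd j jS; rewrite disjoint_subset => /subsetP/(_ l.1) H.
    have H2 : l.1 \in vbl (C j) by apply/imsetP; exists l.
    by have := H H2; rewrite inE lT.
  by [].
apply/forallP => v; apply/implyP => vM; have := HM v; rewrite vM /= ffunE.
by rewrite /TT inE vM.
Qed.


Lemma NS_split i (S : {set I}) : #|NS S| = #|NS (i |: S)| + #|VS i S|.
Proof.
set B := [set x : {ffun V -> bool} | clause_sat x (C i)].
have E1 : NS S :&: B = NS (i |: S).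
  apply/setP => x; rewrite !inE; apply/idP/idP.
    move=> /andP[/andP[/forallP H Ha] Hi]; rewrite Ha andbT; apply/forallP => j.
    rewrite !inE; apply/implyP => /orP[/eqP -> //|jS]; exact: (implyP (H j) jS).
  move=> /andP[/forallP H ->]; rewrite andbT; apply/andP; split.
    by apply/forallP => j; apply/implyP => jS; have := H j; rewrite inE jS orbT.
  by have := H i; rewrite !inE eqxx.
have E2 : NS S :\: B = VS i S.
  by apply/setP => x; rewrite !inE andbC.
by rewrite -(cardsID B (NS S)) E1 E2.
Qed.

Lemma union_bound (S S1 : {set I}) : S1 \subset S ->
  #|NS (S :\: S1)| <= #|NS S| + \sum_(j in S1) #|VS j (S :\: S1)|.
Proof.
move=> sub.
rewrite !card_sumb (eq_bigr _ (fun j _ => card_sumb (VS j (S :\: S1)))) exchange_big /= -big_split /=; apply: leq_sum => x _.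
case Hx: (x \in NS (S :\: S1)) => //.
case Hx2: (x \in NS S) => //.
move: Hx Hx2; rewrite !inE => /andP[/forallP H2 Ha] /negbT; rewrite Ha andbT negb_forall.
case/existsP => j; rewrite negb_imply => /andP[jS nj].
have jS1 : j \in S1.
  apply/negPn/negP => nS1; have := H2 j; rewrite !inE nS1 jS /=.
  by rewrite (negbTE nj).
rewrite (bigD1 j) //= !inE nj Ha andbT /=.
have -> : [forall j0 in S :\: S1, clause_sat x (C j0)].
  by apply/forallP.
by [].
Qed.


Variables (k d kb : nat).
Hypothesis Hdeg : max_degree_le C d.
Hypothesis Hk : forall i, #|vbl (C i)| <= k.
Hypothesis Hkb : forall i, kb <= #|TT i|.
Hypothesis H4 : 4 * k * d <= 2 ^ kb.

Lemma S1_card i (S : {set I}) :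
  #|[set j in S | ~~ [disjoint vbl (C j) & TT i]]| <= k * d.
Proof.
apply: (@leq_trans (#|TT i| * d)); last by rewrite leq_mul2r (leq_trans (subset_leq_card (subsetDl _ _))) ?orbT.
apply: (@leq_trans (\sum_(v in TT i) #|[set j | v \in vbl (C j)]|)); last first.
  by rewrite -sum_nat_const; apply: leq_sum => v _; apply: Hdeg.
rewrite card_sumb (eq_bigr _ (fun v _ => card_sumb [set j | v \in vbl (C j)])) exchange_big /=.
apply: leq_sum => j _; rewrite !inE.
case: (j \in S) => //=; case Hj: [disjoint vbl (C j) & TT i] => //=.
move/negbT: Hj; rewrite -setI_eq0 => /set0Pn[v]; rewrite inE => /andP[v1 v2].
by rewrite (bigD1 v) //= inE v1.
Qed.

Lemma step (S : {set I}) :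
  (forall S' : {set I}, S' \proper S -> forall j, j \notin S' -> 2 ^ kb * #|VS j S'| <= 2 * #|NS S'|) ->
  forall i, i \notin S -> 2 ^ kb * #|VS i S| <= 2 * #|NS S|.
Proof.
move=> IH i iS.
set S1 := [set j in S | ~~ [disjoint vbl (C j) & TT i]]; set S2 := S :\: S1.
have sub : S1 \subset S by apply/subsetP => j; rewrite inE => /andP[].
have a : 2 ^ kb * #|VS i S| <= #|NS S2|.
  have Hd : forall j, j \in S2 -> [disjoint vbl (C j) & TT i].
    move=> j; rewrite !inE; case: (j \in S) => /=; rewrite ?negbK ?andbT ?andbF //.
  apply: (leq_trans _ (indep Hd)).
  apply: leq_mul; first exact: leq_pexp2l.
  apply: subset_leq_card; apply/subsetP => x; rewrite !inE => /and3P[-> /forallP H ->].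
  rewrite andbT /=; apply/forallP => j; apply/implyP; rewrite inE => /andP[_ jS].
  exact: (implyP (H j) jS).
have b0 : 2 ^ kb * \sum_(j in S1) #|VS j S2| <= 2 * #|S1| * #|NS S2|.
  rewrite big_distrr /= (mulnC 2) -mulnA -sum_nat_const; apply: leq_sum => j jS1.
  apply: IH; last by rewrite inE jS1.
  rewrite properE subDset subsetUr /=; apply/subsetPn; exists j.
    by move: jS1; rewrite inE => /andP[].
  by rewrite inE jS1.
have b : 2 * \sum_(j in S1) #|VS j S2| <= #|NS S2|.
  have hS1 := S1_card i S.
  have hpos : 0 < 2 ^ kb by rewrite expn_gt0.
  rewrite -(leq_pmul2l hpos); apply: (leq_trans _ (_ : 4 * k * d * #|NS S2| <= _)); last by rewrite leq_mul2r H4 orbT.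
  rewrite mulnCA; apply: (leq_trans (leq_mul (leqnn 2) b0)).
  rewrite -/S1 in hS1; nia.
have c := union_bound sub.
move: a b c; rewrite -/S2; lia.
Qed.


Lemma VS_bound (S : {set I}) i : i \notin S -> 2 ^ kb * #|VS i S| <= 2 * #|NS S|.
Proof.
suff H : forall n (S : {set I}), #|S| <= n -> forall i, i \notin S -> 2 ^ kb * #|VS i S| <= 2 * #|NS S|.
  exact: (H _ S (leqnn _)).
elim=> [|n IHn] {}S hS; apply: step => S' pS'.
  by move: (proper_card pS'); rewrite leqn0 in hS; rewrite (eqP hS).
apply: IHn; have := proper_card pS'; lia.
Qed.

Hypothesis Hkb1 : 1 <= kb.

Lemma NS_pos (S : {set I}) : 0 < #|NS S|.
Proof.
suff H : forall n (S : {set I}), #|S| <= n -> 0 < #|NS S| by exact: (H _ S (leqnn _)).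
elim=> [|n IHn] {}S hS.
  rewrite leqn0 cards_eq0 in hS; rewrite (eqP hS); apply/card_gt0P.
  exists [ffun v => sigma v]; rewrite !inE; apply/andP; split; apply/forallP => v.
    by rewrite inE.
  by rewrite ffunE eqxx implybT.
have [S0|[i iS]] := set_0Vmem S.
  by apply: IHn; rewrite S0 cards0.
have hS' : #|S :\ i| <= n by move: hS; rewrite (cardsD1 i S) iS; lia.
have := NS_split i (S :\ i); rewrite setD1K //.
have := VS_bound (S := S :\ i) (i := i); rewrite !inE eqxx /= => /(_ isT) hV.
have := IHn _ hS'.
have : 4 <= 2 ^ kb.
  have hk : 1 <= k by apply: (leq_trans Hkb1); apply: (leq_trans (Hkb i));
     apply: (leq_trans _ (Hk i)); apply: subset_leq_card; apply: subsetDl.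
  have hd : 1 <= d.
    have : 0 < #|TT i| by apply: (leq_trans Hkb1).
    case/card_gt0P => v; rewrite inE => /andP[_ vi].
    apply: leq_trans (Hdeg v); apply/card_gt0P; exists i; rewrite inE //.
  by apply: leq_trans H4; nia.
move: hV; move: (2 ^ kb) #|VS i (S :\ i)| #|NS (S :\ i)| #|NS S| => P a b c ha hP hb hc; have : 4 * a <= P * a by rewrite leq_mul2r hP orbT. lia.
Qed.

Lemma count_pos : 0 < count_sat C M sigma.
Proof.
have -> : count_sat C M sigma = #|NS setT|.
  apply: eq_card => x; rewrite !inE; congr andb.
  by apply/forallP/forallP => H j; [rewrite inE; exact: H | have := H j; rewrite inE].
exact: NS_pos.
Qed.

End LLL.
Local Open Scope ring_scope.
Section Glauber.
Variables (R : realType) (V I : finType) (C : I -> {set (V * bool)}) (M : {set V}).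
Hypothesis hc : forall X : Mconf M, (0 < count_sat C M (ext X))%N.

Local Notation cX X := (count_sat C M (ext X)).
Local Notation Z := (count_sat C set0 (fun _ => false)).
Definition rr (x : {ffun V -> bool}) : Mconf M := [ffun u => x (val u)].

Lemma ext_val (X : Mconf M) (u : Mvar M) : ext X (val u) = X u.
Proof. by rewrite /ext valK. Qed.

Lemma agree_M (x : {ffun V -> bool}) (X : Mconf M) : agree_on M x (ext X) = (rr x == X).
Proof.
apply/forallP/eqP => [H|<-].
  apply/ffunP => u; rewrite ffunE; have := H (val u); rewrite (valP u) /= ext_val.
  by move/eqP.
move=> v; apply/implyP => vM; rewrite /ext insubT ffunE //.
Qed.

Lemma agree_Mu x (X : Mconf M) (u : Mvar M) :
  agree_on (M :\ val u) x (ext X) = [forall w : Mvar M, (w != u) ==> (x (val w) == X w)].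
Proof.
apply/forallP/forallP => H w.
  apply/implyP => wu; have := H (val w); rewrite !inE (valP w) andbT ext_val.
  by rewrite (inj_eq val_inj) wu.
apply/implyP; rewrite !inE => /andP[wu wM]; rewrite /ext insubT.
have := H (Sub w wM); rewrite -(inj_eq val_inj) SubK wu //.
Qed.

Lemma sum_c : (\sum_(X : Mconf M) cX X = Z)%N.
Proof.
rewrite /count_sat -sum1_card (partition_big rr predT) //=.
apply: eq_bigr => X _; rewrite -sum1_card; apply: eq_bigl => x.
rewrite !inE agree_M; case: (sat C x) => /=; rewrite ?andbF //.
by have -> : agree_on set0 x xpred0 by apply/forallP => v; rewrite inE.
Qed.


Definition agreeu (s t : Mconf M) (u : Mvar M) := [forall w : Mvar M, (w != u) ==> (s w == t w)].
Definition Dd (s : Mconf M) (u : Mvar M) := count_sat C (M :\ val u) (ext s).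
Definition fset (s : Mconf M) (u : Mvar M) (b : bool) : Mconf M := [ffun w => if w == u then b else s w].

Lemma eq_fset s t u b : (t == fset s u b) = agreeu s t u && (t u == b).
Proof.
apply/eqP/andP => [->|[/forallP H /eqP tb]].
  split; last by rewrite ffunE eqxx.
  by apply/forallP => w; apply/implyP => wu; rewrite ffunE (negbTE wu).
apply/ffunP => w; rewrite ffunE; case: eqP => [->//|/eqP wu].
by rewrite (eqP (implyP (H w) wu)).
Qed.

Lemma num_eq s t u : agreeu s t u ->
  #|[set x : {ffun V -> bool} | [&& sat C x, agree_on (M :\ val u) x (ext s) & x (val u) == t u]]| = cX t.
Proof.
move=> /forallP Hst; apply: eq_card => x; rewrite !inE agree_Mu agree_M.
congr andb; apply/andP/eqP => [[/forallP H /eqP xu]|E].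
  apply/ffunP => w; rewrite ffunE; case: (eqVneq w u) => [->//|wu].
  by rewrite (eqP (implyP (H w) wu)) (eqP (implyP (Hst w) wu)).
split; last by rewrite -E /rr ffunE.
apply/forallP => w; apply/implyP => wu; rewrite (eqP (implyP (Hst w) wu)) -E /rr ffunE //.
Qed.

Lemma D_eq s t u : agreeu s t u -> Dd s u = Dd t u.
Proof.
move=> /forallP Hst; apply: eq_card => x; rewrite !inE !agree_Mu; congr andb.
apply: eq_forallb => w; case: (eqVneq w u) => //= wu.
by rewrite (eqP (implyP (Hst w) wu)).
Qed.

Lemma agreeu_refl s u : agreeu s s u.
Proof. by apply/forallP => w; apply/implyP. Qed.

Lemma agreeuC s t u : agreeu s t u = agreeu t s u.
Proof. by rewrite /agreeu; apply: eq_forallb => w; rewrite [s w == _]eq_sym. Qed.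

Lemma D_pos s u : (0 < Dd s u)%N.
Proof.
apply: (leq_trans (hc s)); rewrite -(num_eq (agreeu_refl s u)).
by apply: subset_leq_card; apply/subsetP => x; rewrite !inE => /and3P[-> -> _].
Qed.

Lemma cm_eq s t u : agreeu s t u ->
  cond_marg C R (M :\ val u) (ext s) (val u) (t u) = (cX t)%:R / (Dd s u)%:R.
Proof. by move=> H; rewrite /cond_marg num_eq. Qed.

Lemma cm_ge0 S sg v b : 0 <= cond_marg C R S sg v b.
Proof. by rewrite /cond_marg divr_ge0 ?ler0n. Qed.

Lemma cm_sum (s : Mconf M) (u : Mvar M) :
  cond_marg C R (M :\ val u) (ext s) (val u) true + cond_marg C R (M :\ val u) (ext s) (val u) false = 1.
Proof.
rewrite /cond_marg -mulrDl -natrD.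
set A := [set x : {ffun V -> bool} | sat C x && agree_on (M :\ val u) x (ext s)].
set B := [set x : {ffun V -> bool} | x (val u)].
have -> : [set x : {ffun V -> bool} | [&& sat C x, agree_on (M :\ val u) x (ext s) & x (val u) == true]] = A :&: B.
  by apply/setP => x; rewrite !inE eqb_id andbA.
have -> : [set x : {ffun V -> bool} | [&& sat C x, agree_on (M :\ val u) x (ext s) & x (val u) == false]] = A :\: B.
  by apply/setP => x; rewrite !inE eqbF_neg andbA andbC.
rewrite cardsID divff // pnatr_eq0 -lt0n; exact: D_pos.
Qed.

Lemma sum_agree (s : Mconf M) (u : Mvar M) (G : bool -> R) :
  \sum_(t : Mconf M) (if agreeu s t u then G (t u) else 0) = G true + G false.
Proof.
rewrite (eq_bigr (fun t => (if t == fset s u true then G true else 0) + (if t == fset s u false then G false else 0))).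
  by rewrite big_split /= -!big_mkcond /= !big_pred1_eq.
move=> t _; rewrite !eq_fset; case: (agreeu s t u) => /=; last by rewrite addr0.
by case: (t u) => /=; rewrite ?addr0 ?add0r.
Qed.


Local Notation g := (glauber C R (M:=M)).
Local Notation mu := (muM C R (M:=M)).

Lemma g_ge0 s t : 0 <= g s t.
Proof.
rewrite /glauber; case: ifP => _; first by rewrite ler0n.
rewrite mulr_ge0 ?invr_ge0 ?ler0n // sumr_ge0 // => u _; case: ifP => _ //; exact: cm_ge0.
Qed.

Lemma card_Mvar : #|{: Mvar M}| = #|M|.
Proof. by rewrite card_sig; apply: eq_card => v. Qed.

Lemma g_row s : \sum_t g s t = 1.
Proof.
rewrite /glauber; case E: (M == set0).
  rewrite (bigD1 s) //= eqxx big1 ?addr0 // => t /negbTE; rewrite eq_sym => -> //.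
rewrite -mulr_sumr exchange_big /=.
rewrite (eq_bigr (fun _ => 1)); last first.
  move=> u _; rewrite -(cm_sum s u).
  exact: (sum_agree s u (fun b => cond_marg C R (M :\ val u) (ext s) (val u) b)).
rewrite sumr_const card_Mvar mulVf // pnatr_eq0 cards_eq0 E //.
Qed.

Lemma detailed s t : mu s * g s t = mu t * g t s.
Proof.
rewrite /glauber; case E: (M == set0).
  by case: (eqVneq s t) => [->//|st]; rewrite !mulr0.
set m := (#|M|%:R)^-1.
suff H : (cX s)%:R * (\sum_u (if agreeu s t u then cond_marg C R (M :\ val u) (ext s) (val u) (t u) else 0))
       = (cX t)%:R * (\sum_u (if agreeu t s u then cond_marg C R (M :\ val u) (ext t) (val u) (s u) else 0)) :> R.
  rewrite /muM; transitivity (((cX s)%:R * (\sum_u (if agreeu s t u then cond_marg C R (M :\ val u) (ext s) (val u) (t u) else 0))) * (m / Z%:R)).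
    rewrite /agreeu; ring.
  rewrite H /agreeu; ring.
rewrite !mulr_sumr; apply: eq_bigr => u _; rewrite agreeuC.
case Ha: (agreeu t s u); last by rewrite !mulr0.
rewrite cm_eq; last by rewrite agreeuC.
rewrite cm_eq // (D_eq Ha); ring.
Qed.

Lemma mu_stat t : \sum_s mu s * g s t = mu t.
Proof. by rewrite (eq_bigr _ (fun s _ => detailed s t)) -mulr_sumr g_row mulr1. Qed.

Lemma Z_pos : (0 < Z)%N.
Proof.
have [X _] : exists X : Mconf M, true by exists [ffun => false].
by rewrite -sum_c (bigD1 X) //= ltn_addr.
Qed.

Lemma mu_pos s : 0 < mu s.
Proof. by rewrite /muM divr_gt0 ?ltr0n ?hc ?Z_pos. Qed.

Lemma mu_sum : \sum_s mu s = 1.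
Proof.
rewrite /muM -mulr_suml -natr_sum sum_c divff // pnatr_eq0 -lt0n; exact: Z_pos.
Qed.

Lemma g_pos s u b : 0 < g s (fset s u b).
Proof.
rewrite /glauber; have -> : (M == set0) = false.
  by apply/negbTE/set0Pn; exists (val u); exact: valP.
rewrite mulr_gt0 // ?invr_gt0 ?ltr0n ?card_gt0 //.
  by apply/set0Pn; exists (val u); exact: valP.
rewrite (bigD1 u) //=.
have Ha : [forall w : Mvar M, (w != u) ==> (s w == fset s u b w)] by have := eq_fset s (fset s u b) u b; rewrite eqxx => /esym/andP[].
rewrite Ha ltr_wpDr ?sumr_ge0 // => [w _|]; first by case: ifP => _ //; exact: cm_ge0.
rewrite cm_eq // divr_gt0 // ltr0n ?hc //; exact: D_pos.
Qed.


Lemma unique (pi : Mconf M -> R) : is_stationary g pi -> forall X, pi X = mu X.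
Proof.
case=> pi_ge0 [pi_sum pi_stat].
pose q s := pi s / mu s.
have [s0 _ Hmin] := @arg_minP _ R (Mconf M) [ffun => false] predT q isT.
set a := q s0.
pose nu s := pi s - a * mu s.
have nu_ge0 s : 0 <= nu s.
  have := Hmin s isT; rewrite /nu subr_ge0 -/a /q => h.
  by rewrite -ler_pdivlMr ?mu_pos.
have nu0 : nu s0 = 0 by rewrite /nu /a /q divfK ?subrr // gt_eqF ?mu_pos.
have nu_stat t : \sum_s nu s * g s t = nu t.
  rewrite /nu (eq_bigr (fun s => pi s * g s t - a * (mu s * g s t))); last first.
    by move=> s _; rewrite mulrBl mulrA.
  by rewrite sumrB pi_stat -mulr_sumr mu_stat.
have prop : forall n (s : Mconf M), #|[set w | s w != s0 w]| = n -> nu s = 0.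
  elim=> [|n IHn] s.
    move/eqP; rewrite cards_eq0 => /eqP E.
    suff -> : s = s0 by [].
    apply/ffunP => w; apply/eqP/negPn/negP => H.
    by move/setP: E => /(_ w); rewrite !inE H.
  move=> hn; have : (0 < #|[set w | s w != s0 w]|)%N by rewrite hn.
  case/card_gt0P => w; rewrite inE => sw.
  set s' := fset s w (s0 w).
  have hs' : nu s' = 0.
    apply: IHn.
    have -> : [set w0 | s' w0 != s0 w0] = [set w0 | s w0 != s0 w0] :\ w.
      apply/setP => w0; rewrite !inE /s' ffunE.
      by case: (eqVneq w0 w) => [->|]; rewrite ?eqxx.
    by move: hn; rewrite (cardsD1 w) inE sw add1n => -[].
  have := nu_stat s'; rewrite hs' => /psumr_eq0P H.
  have := H (fun x _ => mulr_ge0 (nu_ge0 x) (g_ge0 x s')) s isT => /eqP.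
  by rewrite mulf_eq0 (gt_eqF (g_pos _ _ _)) orbF => /eqP.
have all0 s : nu s = 0 := prop _ s erefl.
have pia s : pi s = a * mu s by apply/eqP; rewrite -subr_eq0; apply/eqP/all0.
have a1 : a = 1.
  by move: pi_sum; rewrite (eq_bigr _ (fun s _ => pia s)) -mulr_sumr mu_sum mulr1.
by move=> X; rewrite pia a1 mul1r.
Qed.

Lemma stat_mu : is_stationary g mu.
Proof.
split; first by move=> s; apply/ltW/mu_pos.
split; [exact: mu_sum | exact: mu_stat].
Qed.

End Glauber.

Unset Implicit Arguments.

Theorem lemma4p2 (R : realType) (V I : finType) (C : I -> {set (V * bool)})
    (k d ka kb : nat) (M : {set V}) :
  k_uniform C k ->
  max_degree_le C d ->
  (1 <= ka)%N -> (1 <= kb)%N -> (ka + kb <= k)%N ->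
  (forall i, (ka <= #|vbl (C i) :&: M|)%N /\ (kb <= #|vbl (C i) :\: M|)%N) ->
  4 * expR 1 * d%:R * k%:R <= 2 ^+ kb :> R ->
  (forall X : Mconf M, 0 < muM C R X) /\
  (forall pi : Mconf M -> R,
     is_stationary (glauber C R (M:=M)) pi <-> (forall X, pi X = muM C R X)).
Proof.
move=> Hunif Hdeg ka1 kb1 hk Hcl He.
have Hk : forall i, (#|vbl (C i)| <= k)%N by move=> i; case: (Hunif i) => _ ->.
have Hkb : forall i, (kb <= #|TT C M i|)%N by move=> i; case: (Hcl i).
have H4 : (4 * k * d <= 2 ^ kb)%N.
  rewrite -(ler_nat R) natrX !natrM.
  have e1 : 1 <= expR 1 :> R.
    by apply: le_trans (expR_ge1Dx 1); rewrite lerDl.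
  apply: le_trans He.
  have hd : 0 <= d%:R :> R by [].
  have hk0 : 0 <= k%:R :> R by [].
  have -> : 4%:R = 4 :> R by [].
  have h := ler_wpM2r (mulr_ge0 hd hk0) e1. nra.
have hc : forall X : Mconf M, (0 < count_sat C M (ext X))%N.
  by move=> X; exact: (count_pos (ext X) Hdeg Hk Hkb H4 kb1).
split; first exact: mu_pos.
move=> pi; split; first exact: unique.
move=> H; have := stat_mu R hc; rewrite /is_stationary.
case=> h1 [h2 h3]; split; first by move=> s; rewrite H.
split; first by rewrite (eq_bigr _ (fun s _ => H s)).
by move=> t; rewrite H -h3; apply: eq_bigr => s _; rewrite H.
Qed.
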